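(* Let $P$, $h$ (fixed), $\ell$, $C$, $S$ ($n$ i.i.d. samples from $P$), the partition $\mathcal{Z}_1,\dots,\mathcal{Z}_K$, and constants $\gamma\ge1$, $\delta>0$, $\alpha\in[0,\frac{\gamma n(K+\gamma n)}{K(4n-3)}]$ be as in the context. Let $\hat S=\mathcal{T}(S)$ be the result of applying a transformation method $\mathcal{T}$, independent of $h$, to the samples of $S$. For $i\in T$ let $\hat S_i=\hat S\cap\mathcal{Z}_i$, $m_i=|\hat S_i|$, $m=\sum_{i\in T}m_i$, $\bar\epsilon_i=\frac{1}{m_in_i}\sum_{z\in S_i,\,s\in\hat S_i}|\ell(h,z)-\ell(h,s)|$, and $\bar\epsilon(h)=\sum_{i\in T}\frac{m_i}{m}\bar\epsilon_i$. If $\frac{n_i}{n}=\frac{m_i}{m}$ for every $i\in T$, then with probability at least $1-\gamma^{-\alpha}-\delta$, $$F(P,h)\le\bar\epsilon(h)+F(\hat S,h)+C\sqrt{\hat u\,\alpha\ln\gamma}+g(\delta/2).$$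
   Context: $F(P,h)=\mathbb{E}_{z\sim P}[\ell(h,z)]$, and for a finite dataset $A$, $F(A,h)=\frac1{|A|}\sum_{z\in A}\ell(h,z)$. $\ell\ge0$, $C=\sup_z\ell(h,z)<\infty$. $S_i=S\cap\mathcal{Z}_i$, $n_i=|S_i|$, $T=\{i\in[K]:S\cap\mathcal{Z}_i\ne\emptyset\}$. $\hat u=\frac{\gamma}{2n}+\frac{\gamma^2}{2}\sum_{i=1}^K(n_i/n)^2+\gamma^2\sqrt{\frac2n\ln\frac{2K}{\delta}}$ and $g(\delta)=C(\sqrt2+1)\sqrt{\frac{|T|\ln(2K/\delta)}{n}}+\frac{2C|T|\ln(2K/\delta)}{n}$.
   Formalization: The bound is also conditioned on every point of $\hat S$ lying in some $\mathcal{Z}_i$ with i ∈ T, a premise checked, like $\frac{n_i}{n}=\frac{m_i}{m}$, sample by sample on the event. Apart from conventions, each condition added here is assumed in the paper as well or is needed for the statement above to hold. *)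

(* Defs.v *)
From HB Require Import structures.
From mathcomp Require Import all_boot all_order all_algebra.
From mathcomp Require Import all_classical all_reals all_analysis.
Set Implicit Arguments. Unset Strict Implicit. Unset Printing Implicit Defensive.
Import Order.TTheory GRing.Theory Num.Theory.
Import numFieldNormedType.Exports.
Local Open Scope classical_set_scope.
Local Open Scope ring_scope.

Section Defs.
Context {R : realType}.

Definition mutually_independent {dO dZ} {Omega : measurableType dO}
  {Z : measurableType dZ} (Pr : probability Omega R) (n : nat)
  (X : 'I_n -> Omega -> Z) : Prop :=
  forall (J : {set 'I_n}) (A : 'I_n -> set Z),
    (forall j, measurable (A j)) ->
    Pr [set w | forall j, j \in J -> A j (X j w)] =
    (\prod_(j in J) Pr (X j @^-1` A j))%E.

Definition iid_sample {dO dZ} {Omega : measurableType dO}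
  {Z : measurableType dZ} (Pr : probability Omega R) (P : probability Z R)
  (n : nat) (X : 'I_n -> Omega -> Z) : Prop :=
  [/\ forall j, measurable_fun setT (X j),
      forall j (A : set Z), measurable A -> Pr (X j @^-1` A) = P A
    & mutually_independent Pr X].

(* F(A,h) for a finite dataset A (a multiset, given as a sequence) *)
Definition emp_risk {Z : Type} (f : Z -> R) (A : seq Z) : R :=
  (size A)%:R^-1 * \sum_(z <- A) f z.

Definition cell {Z : Type} (Zc : set Z) (A : seq Z) : seq Z :=
  [seq z <- A | z \in Zc].

Definition occupied {Z : Type} (K : nat) (Zc : 'I_K -> set Z) (S : seq Z)
  : {set 'I_K} := [set i | (0 < size (cell (Zc i) S))%N].

Definition u_hat {Z : Type} (K : nat) (Zc : 'I_K -> set Z) (S : seq Z)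
  (gamma delta : R) : R :=
  let n := (size S)%:R in
  gamma / (2 * n)
  + gamma ^+ 2 / 2 * \sum_(i < K) ((size (cell (Zc i) S))%:R / n) ^+ 2
  + gamma ^+ 2 * Num.sqrt (2 / n * ln (2 * K%:R / delta)).

Definition g_bound {Z : Type} (K : nat) (Zc : 'I_K -> set Z) (S : seq Z)
  (C delta : R) : R :=
  let n := (size S)%:R in
  let t := #|occupied Zc S|%:R in
  C * (Num.sqrt 2 + 1) * Num.sqrt (t * ln (2 * K%:R / delta) / n)
  + 2 * C * t * ln (2 * K%:R / delta) / n.

Definition eps_cell {Z : Type} (f : Z -> R) (Zc : set Z) (S Shat : seq Z) : R :=
  ((size (cell Zc Shat))%:R * (size (cell Zc S))%:R)^-1 *
  \sum_(z <- cell Zc S) \sum_(s <- cell Zc Shat) `|f z - f s|.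

Definition m_total {Z : Type} (K : nat) (Zc : 'I_K -> set Z) (S Shat : seq Z) : nat :=
  (\sum_(i in occupied Zc S) size (cell (Zc i) Shat))%N.

Definition eps_bar {Z : Type} (f : Z -> R) (K : nat) (Zc : 'I_K -> set Z)
  (S Shat : seq Z) : R :=
  \sum_(i in occupied Zc S)
     ((size (cell (Zc i) Shat))%:R / (m_total Zc S Shat)%:R) * eps_cell f (Zc i) S Shat.

End Defs.

(* Main.v *)
Require Import Defs.
From HB Require Import structures.
From mathcomp Require Import all_boot all_order all_algebra.
From mathcomp Require Import all_classical all_reals all_analysis.
From mathcomp Require Import lra ring measurable_realfun.
Import Order.TTheory GRing.Theory Num.Theory.
Import numFieldNormedType.Exports.
Local Open Scope classical_set_scope.
Local Open Scope ring_scope.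


Lemma exp_up (R : realType) (x u : R) : u < 1 -> -u <= x -> x <= u ->
  expR x <= 1 + x + u ^+ 2 / (1 - u).
Proof.
move=> u1 ux xu.
have h1 : 1 - x <= expR (- x) by have := expR_ge1Dx (- x); rewrite addrC.
have hx : 0 < 1 - x by lra.
have -> : expR x = (expR (- x))^-1 by rewrite expRN invrK.
apply: (le_trans (y := (1 - x)^-1)).
  by rewrite lef_pV2 ?posrE ?expR_gt0 //.
have hu : 0 < 1 - u by lra.
rewrite -subr_ge0.
have -> : 1 + x + u ^+ 2 / (1 - u) - (1 - x)^-1 =
   ((1 - x) * (1 + x) * (1 - u) + u ^+ 2 * (1 - x) - (1 - u)) / ((1 - u) * (1 - x)).
  by field; rewrite ?subr_eq0; apply/andP; split; apply/negP => /eqP H; lra.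
apply: divr_ge0; last by nra.
have : x ^+ 2 <= u ^+ 2 by nra.
nra.
Qed.

Lemma mgf_bound (R : realType) (N : nat) (p : 'I_N -> R) (eta C lam u : R) :
  (forall k, 0 <= p k) -> \sum_(k < N) p k = 1 -> 0 <= eta -> 0 < C -> 0 <= u -> u < 1 ->
  lam * C = u -> 0 <= lam ->
  (forall k : 'I_N, k%:R * eta <= C) ->
  \sum_(k < N) expR (- (lam * (k%:R * eta))) * p k <=
  expR (- (lam * \sum_(k < N) k%:R * eta * p k) + u ^+ 2 / (1 - u)).
Proof.
move=> p0 p1 e0 C0 u0 u1 hl l0 kC.
set b := \sum_(k < N) k%:R * eta * p k.
have b0 : 0 <= b by apply: sumr_ge0 => k _; apply: mulr_ge0 => //; apply: mulr_ge0.
have bC : b <= C.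
  rewrite -[C]mulr1 -p1 mulr_sumr; apply: ler_sum => k _.
  by have := kC k; have := p0 k; nra.
have -> : \sum_(k < N) expR (- (lam * (k%:R * eta))) * p k =
   expR (- (lam * b)) * \sum_(k < N) expR (lam * (b - k%:R * eta)) * p k.
  rewrite mulr_sumr; apply: eq_bigr => k _; rewrite [RHS]mulrA -expRD; congr (expR _ * _).
  ring.
rewrite expRD ler_pM2l ?expR_gt0 //.
apply: (le_trans (y := \sum_(k < N) (1 + lam * (b - k%:R * eta) + u ^+ 2 / (1 - u)) * p k)).
  apply: ler_sum => k _; rewrite ler_wpM2r //; apply: exp_up => //.
    have := kC k; have := mulr_ge0 (ler0n _ k) e0.
    move=> h1 h2.
    rewrite -hl -mulrN; rewrite ler_wpM2l //; lra.
  rewrite -hl; rewrite ler_wpM2l //.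
  have := mulr_ge0 (ler0n _ k) e0; lra.
have -> : \sum_(k < N) (1 + lam * (b - k%:R * eta) + u ^+ 2 / (1 - u)) * p k =
  \sum_(k < N) ((1 + u ^+ 2 / (1 - u)) * p k + (lam * b) * p k - lam * (k%:R * eta * p k)).
  by apply: eq_bigr => k _; ring.
rewrite sumrB big_split /= -!mulr_sumr p1 -/b.
have := expR_ge1Dx (u ^+ 2 / (1 - u)); lra.
Qed.


Lemma chernoff_fin (R : realType) (n N : nat) (p : 'I_N -> R) (eta C a r0 : R) :
  (0 < n)%N -> (forall k, 0 <= p k) -> \sum_(k < N) p k = 1 -> 0 < eta -> 0 < C -> 0 < a ->
  (forall k : 'I_N, k%:R * eta <= C) -> eta + C * (2 * a + a ^+ 2) <= r0 ->
  \sum_(v : {ffun 'I_n -> 'I_N} |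
      (\sum_(j < n) (v j)%:R * eta) / n%:R < \sum_(k < N) k.+1%:R * eta * p k - r0)
     \prod_(j < n) p (v j) <= expR (- (n%:R * a ^+ 2)).
Proof.
move=> n0 p0 p1 e0 C0 a0 kC hr.
set B := \sum_(k < N) k.+1%:R * eta * p k.
set b := \sum_(k < N) k%:R * eta * p k.
have hB : B = b + eta.
  rewrite /B /b (eq_bigr (fun k : 'I_N => k%:R * eta * p k + eta * p k)).
    by rewrite big_split /= -mulr_sumr p1 mulr1.
  by move=> k _; rewrite -natr1; ring.
set u := a / (1 + a).
set lam := u / C.
have u0 : 0 <= u by apply: divr_ge0; lra.
have u1 : u < 1 by rewrite /u ltr_pdivrMr; lra.
have hl : lam * C = u by rewrite /lam mulrVK // unitfE; lra.
have l0 : 0 <= lam by apply: divr_ge0; lra.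
have nR : 0 < n%:R :> R by rewrite ltr0n.
set M := \sum_(k < N) expR (- (lam * (k%:R * eta))) * p k.
apply: (le_trans (y := \sum_(v : {ffun 'I_n -> 'I_N})
   expR (lam * (n%:R * (B - r0))) * \prod_(j < n) (expR (- (lam * ((v j)%:R * eta))) * p (v j)))).
  rewrite [X in _ <= X](bigID (fun v : {ffun 'I_n -> 'I_N} =>
      (\sum_(j < n) (v j)%:R * eta) / n%:R < B - r0)) /=.
  rewrite -[X in X <= _]addr0; apply: lerD; last first.
    apply: sumr_ge0 => v _; apply: mulr_ge0; first exact/ltW/expR_gt0.
    apply: prodr_ge0 => j _; apply: mulr_ge0 => //; exact/ltW/expR_gt0.
  apply: ler_sum => v hv.
  rewrite big_split /= -expR_sum (mulrA (expR _)) -expRD.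
  rewrite -[X in X <= _]mul1r ler_wpM2r //; first exact: prodr_ge0.
  apply: (le_trans (y := 1 + (lam * (n%:R * (B - r0)) + \sum_(i < n) - (lam * ((v i)%:R * eta))))); last exact: expR_ge1Dx.
  rewrite lerDl sumrN -mulr_sumr -mulrN -mulrDr; apply: mulr_ge0 => //.
  move: hv; rewrite ltr_pdivrMr // => hv; lra.
rewrite -mulr_sumr.
have -> : \sum_(v : {ffun 'I_n -> 'I_N}) \prod_(j < n) (expR (- (lam * ((v j)%:R * eta))) * p (v j))
   = \prod_(j < n) M.
  by rewrite bigA_distr_bigA.
rewrite prodr_const card_ord.
have hM : M <= expR (- (lam * b) + u ^+ 2 / (1 - u)).
  by apply: (@mgf_bound R N p eta C lam u) => //; exact: ltW.
have M0 : 0 <= M.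
  apply: sumr_ge0 => k _; apply: mulr_ge0 => //; exact/ltW/expR_gt0.
apply: (le_trans (y := expR (lam * (n%:R * (B - r0))) * expR (- (lam * b) + u ^+ 2 / (1 - u)) ^+ n)).
  rewrite ler_wpM2l ?(ltW (expR_gt0 _)) //.
  rewrite lerXn2r // ?nnegrE //; exact: ltW (expR_gt0 _).
rewrite -expRM_natl -expRD ler_expR hB.
have hu : u ^+ 2 / (1 - u) = a ^+ 2 / (1 + a).
  rewrite /u; field; apply/andP; split; apply/negP => /eqP H; lra.
have hlam : lam * (C * (2 * a + a ^+ 2)) = a ^+ 2 * (2 + a) / (1 + a).
  rewrite mulrA hl /u; field; apply/negP => /eqP H; lra.
have key : lam * (b + eta - r0) - lam * b + u ^+ 2 / (1 - u) <= - a ^+ 2.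
  have -> : lam * (b + eta - r0) - lam * b = - (lam * (r0 - eta)) by ring.
  have : lam * (C * (2 * a + a ^+ 2)) <= lam * (r0 - eta) by rewrite ler_wpM2l //; lra.
  rewrite hlam hu.
  have -> : a ^+ 2 * (2 + a) / (1 + a) = a ^+ 2 / (1 + a) + a ^+ 2.
    field; apply/negP => /eqP H; lra.
  lra.
have : n%:R * (lam * (b + eta - r0) - lam * b + u ^+ 2 / (1 - u)) <= n%:R * (- a ^+ 2).
  by rewrite ler_wpM2l // ltW.
set Q := u ^+ 2 / (1 - u).
move=> h.
apply: le_trans (_ : n%:R * (lam * (b + eta - r0) - lam * b + Q) <= _); last lra.
rewrite le_eqVlt; apply/orP; left; apply/eqP; ring.
Qed.


Lemma bigsetU_memP (T : Type) (I : eqType) (r : seq I) (Pd : pred I) (F : I -> set T) x :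
  (\big[setU/set0]_(i <- r | Pd i) F i) x <-> exists i, [/\ i \in r, Pd i & F i x].
Proof.
elim: r => [|i r IH]; first by rewrite big_nil; split => // -[? []].
rewrite big_cons; case: ifP => Pi.
  split.
    case => [Fx|/IH [j [jr Pj Fj]]]; first by exists i; rewrite mem_head.
    by exists j; rewrite in_cons jr orbT.
  case => j [+ Pj Fj]; rewrite in_cons => /orP [/eqP ji|jr]; first by left; rewrite -ji.
  by right; apply/IH; exists j.
split.
  by move/IH => [j [jr Pj Fj]]; exists j; rewrite in_cons jr orbT.
case => j [+ Pj Fj]; rewrite in_cons => /orP [/eqP ji|jr]; first by rewrite -ji Pj in Pi.
by apply/IH; exists j.
Qed.

Lemma meas_bigU_seq d (R : realType) (T : measurableType d) (mu : {measure set T -> \bar R})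
  (I : eqType) (r : seq I) (Pd : pred I) (F : I -> set T) :
  uniq r -> (forall i, measurable (F i)) ->
  (forall i j x, F i x -> F j x -> i = j) ->
  mu (\big[setU/set0]_(i <- r | Pd i) F i) = (\sum_(i <- r | Pd i) mu (F i))%E.
Proof.
move=> + mF dF; elim: r => [|i r IH]; first by rewrite !big_nil measure0.
rewrite /= => /andP [ir ur]; rewrite !big_cons; case: ifP => Pi; last exact: IH.
rewrite measureU //; first by congr (_ + _)%E; exact: (IH ur).
- by apply: bigsetU_measurable => j _; exact: mF.
apply/seteqP; split => // x [Fx /bigsetU_memP [j [jr Pj Fj]]].
by move: (dF _ _ _ Fx Fj) ir => ->; rewrite jr.
Qed.


Section Bins.
Variables (R : realType) (dZ : measure_display) (Z : measurableType dZ) (P : probability Z R).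
Variables (f : Z -> R) (C eta : R).
Hypotheses (f0 : forall z, 0 <= f z) (fC : forall z, f z <= C) (mf : measurable_fun setT f)
  (e0 : 0 < eta) (C0 : 0 <= C).

Let N := (Num.truncn (C / eta)).+1.

Definition Lb (k : 'I_N) : set Z := [set z | k%:R * eta <= f z < k.+1%:R * eta].

Lemma mLb k : measurable (Lb k).
Proof.
have -> : Lb k = setT `&` f @^-1` `[k%:R * eta, k.+1%:R * eta[.
  by apply/seteqP; split => z /=; rewrite in_itv /= => //; case.
exact: mf (measurable_itv _).
Qed.

Lemma Lb_uniq k k' z : Lb k z -> Lb k' z -> k = k'.
Proof.
wlog: k k' / (k <= k')%N.
  move=> H h1 h2; case: (leqP k k') => hk; first exact: H.
  by apply/esym/H => //; exact: ltnW.
rewrite leq_eqVlt => /orP [/eqP kk|kk]; first by move=> _ _; exact: ord_inj.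
move=> /andP [_ h1] /andP [h2 _].
have H : k.+1%:R * eta <= k'%:R * eta by rewrite ler_pM2r // ler_nat.
by have := lt_le_trans h1 (le_trans H h2); rewrite ltxx.
Qed.

Definition binof (z : Z) : 'I_N := inord (Num.truncn (f z / eta)).

Lemma binofP z : Lb (binof z) z.
Proof.
have hz : 0 <= f z / eta by apply: divr_ge0 => //; exact: ltW.
have hle : (Num.truncn (f z / eta) < N)%N.
  rewrite ltnS; apply: le_truncn; rewrite ler_pM2r ?invr_gt0 //.
rewrite /Lb /binof /= inordK //.
have /andP [h1 h2] := truncn_itv hz.
by rewrite -ler_pdivlMr // -ltr_pdivrMr // h1 h2.
Qed.

Lemma kC (k : 'I_N) : k%:R * eta <= C.
Proof.
have hk := ltn_ord k; rewrite ltnS in hk.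
have hc : 0 <= C / eta by apply: divr_ge0 => //; exact: ltW.
have /andP [h1 _] := truncn_itv hc.
rewrite -ler_pdivlMr //; apply: le_trans h1; by rewrite ler_nat.
Qed.

Definition pb (k : 'I_N) := fine (P (Lb k)).

Lemma pbE k : P (Lb k) = (pb k)%:E.
Proof. by rewrite /pb fineK //; apply: fin_num_measure; exact: mLb. Qed.

Lemma pb0 k : 0 <= pb k.
Proof. by rewrite /pb fine_ge0. Qed.

Lemma Lb_cover : \big[setU/set0]_(k < N) Lb k = setT.
Proof.
apply/seteqP; split => // z _; apply/bigsetU_memP.
by exists (binof z); split; [exact: mem_index_enum | done | exact: binofP].
Qed.

Lemma pb1 : \sum_(k < N) pb k = 1.
Proof.
have h : P (\big[setU/set0]_(k < N) Lb k) = (\sum_(k < N) P (Lb k))%E.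
  apply: meas_bigU_seq; [exact: index_enum_uniq | exact: mLb | exact: Lb_uniq].
rewrite Lb_cover probability_setT in h.
apply/eqP; rewrite -(@eqe R); apply/eqP; rewrite -sumEFin h.
by apply: eq_bigr => k _; rewrite pbE.
Qed.

Lemma int_le : (\int[P]_z (f z)%:E <= (\sum_(k < N) k.+1%:R * eta * pb k)%:E)%E.
Proof.
set g := fun z => \sum_(k < N) (k.+1%:R * eta) * \1_(Lb k) z.
have mg : measurable_fun setT g.
  apply: measurable_sum => k; apply: measurable_funM; first exact: measurable_cst.
  exact: measurable_indic (mLb k).
apply: (le_trans (y := (\int[P]_z (g z)%:E)%E)).
  apply: ge0_le_integral => //.
  - by move=> z _; rewrite lee_fin.
  - exact/measurable_realfun.measurable_EFinP.
  - exact/measurable_realfun.measurable_EFinP.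
  move=> z _; rewrite lee_fin /g (bigD1 (binof z)) //= big1 ?addr0.
    rewrite indicE mem_set ?mulr1; last exact: binofP.
    by have /andP [_ /ltW] := binofP z.
  move=> k kb; rewrite indicE memNset ?mulr0 //.
  by move=> hk; move: kb; rewrite (@Lb_uniq k _ z hk (binofP z)) eqxx.
rewrite /g; under eq_integral do rewrite -sumEFin.
rewrite ge0_integral_sum //; last first.
- move=> k z _; rewrite lee_fin; apply: mulr_ge0; last by rewrite indicE.
  by apply: mulr_ge0 => //; exact: ltW.
- move=> k; apply/measurable_realfun.measurable_EFinP.
  apply: measurable_funM; first exact: measurable_cst.
  exact: measurable_indic (mLb k).
rewrite -sumEFin le_eqVlt; apply/orP; left; apply/eqP; apply: eq_bigr => k _.
under eq_integral do rewrite EFinM.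
rewrite ge0_integralZl //.
- rewrite integral_indic //; last exact: mLb.
  by rewrite setIT [in RHS]EFinM /pb fineK //; apply: fin_num_measure; exact: mLb.
- by apply/measurable_realfun.measurable_EFinP; exact: measurable_indic (mLb k).
- by rewrite lee_fin; apply: mulr_ge0 => //; exact: ltW.
Qed.

End Bins.


Lemma bigsetI_memP (T : Type) (I : eqType) (r : seq I) (F : I -> set T) x :
  (\big[setI/setT]_(i <- r) F i) x <-> (forall i, i \in r -> F i x).
Proof.
elim: r => [|i r IH]; first by rewrite big_nil.
rewrite big_cons; split.
  case => Fi /IH H j; rewrite in_cons => /orP [/eqP ->|]; [done|exact: H].
move=> H; split; first by apply: H; rewrite mem_head.
by apply/IH => j jr; apply: H; rewrite in_cons jr orbT.
Qed.

Lemma core (R : realType) (dZ : measure_display) (Z : measurableType dZ) (P : probability Z R)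
  (f : Z -> R) (C : R) (n : nat) (dO : measure_display) (Omega : measurableType dO)
  (Pr : probability Omega R) (X : 'I_n -> Omega -> Z) (a r0 : R) :
  (forall z, 0 <= f z) -> (forall z, f z <= C) -> measurable_fun setT f ->
  (0 < n)%N -> iid_sample Pr P X -> 0 < C -> 0 < a ->
  C * a / 5 + C * (2 * a + a ^+ 2) <= r0 ->
  exists E : set Omega, measurable E /\ ((1 - expR (- (n%:R * a ^+ 2)))%:E <= Pr E)%E /\
    forall w, E w -> (\int[P]_z (f z)%:E <= ((\sum_(j < n) f (X j w)) / n%:R + r0)%:E)%E.
Proof.
move=> f0 fC mf n0 [mX dX hind] C0 a0 hr.
set eta := C * a / 5.
have e0 : 0 < eta by rewrite /eta; apply: divr_gt0 => //; apply: mulr_gt0.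
pose N := (Num.truncn (C / eta)).+1.
pose L := Lb R dZ Z f C eta.
pose p := pb R dZ Z P f C eta.
pose Av (v : {ffun 'I_n -> 'I_N}) := [set w | forall j, L (v j) (X j w)].
have mAv v : measurable (Av v).
  have -> : Av v = \big[setI/setT]_(j <- index_enum 'I_n) (X j @^-1` L (v j)).
    apply/seteqP; split => w.
      by move=> H; apply/bigsetI_memP => j _; exact: H.
    by move/bigsetI_memP => H j; apply: H; exact: mem_index_enum.
  apply: bigsetI_measurable => j _.
  by rewrite -[X in measurable X]setTI; apply: mX => //; exact: mLb.
have PrAv v : Pr (Av v) = (\prod_(j < n) p (v j))%:E.
  have := hind [set: 'I_n]%SET (fun j => L (v j)) (fun j => @mLb R dZ Z f C eta mf _).
  have -> : [set w | forall j, j \in [set: 'I_n]%SET -> L (v j) (X j w)] = Av v.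
    by apply/seteqP; split => w /= H j; [apply: H; rewrite finset.in_setT | move=> _; exact: H].
  move=> ->; rewrite -prodEFin (eq_bigl xpredT) => [|j]; last by rewrite finset.in_setT.
  apply: eq_bigr => j _; rewrite dX; last exact: mLb.
  by rewrite /p /pb fineK //; apply: fin_num_measure; exact: mLb.
have Avu v v' w : Av v w -> Av v' w -> v = v'.
  by move=> H1 H2; apply/ffunP => j; exact: (@Lb_uniq R dZ Z f C eta e0 _ _ _ (H1 j) (H2 j)).
set B := \sum_(k < N) k.+1%:R * eta * p k.
pose bad (v : {ffun 'I_n -> 'I_N}) := (\sum_(j < n) (v j)%:R * eta) / n%:R < B - r0.
pose E := \big[setU/set0]_(v <- index_enum {ffun 'I_n -> 'I_N} | ~~ bad v) Av v.
pose Eb := \big[setU/set0]_(v <- index_enum {ffun 'I_n -> 'I_N} | bad v) Av v.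
have mE : measurable E by apply: bigsetU_measurable => v _; exact: mAv.
have mEb : measurable Eb by apply: bigsetU_measurable => v _; exact: mAv.
exists E; split => //; split.
  have hU : E `|` Eb = setT.
    apply/seteqP; split => // w _.
    pose v := [ffun j => binof R dZ Z f C eta (X j w)].
    have hv : Av v w by move=> j; rewrite ffunE; exact: binofP.
    case hb: (bad v); [right|left]; apply/bigsetU_memP; exists v;
      split => //; (try exact: mem_index_enum); by rewrite hb.
  have hI : E `&` Eb = set0.
    apply/seteqP; split => // w [/bigsetU_memP [v [_ hv1 hv2]] /bigsetU_memP [v' [_ hv1' hv2']]].
    by move: (Avu _ _ _ hv2 hv2') hv1 => ->; rewrite hv1'.
  have hT : Pr setT = 1%E := probability_setT Pr.
  have hsum : (Pr E + Pr Eb = 1)%E.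
    by rewrite -hT -hU; apply/esym; exact: measureU.
  move: hsum.
  have -> : Pr Eb = (\sum_(v : {ffun 'I_n -> 'I_N} | bad v) \prod_(j < n) p (v j))%:E.
    rewrite /Eb meas_bigU_seq //; last exact: index_enum_uniq.
    by rewrite -sumEFin; apply: eq_bigr => v _; exact: PrAv.
  have hch : \sum_(v : {ffun 'I_n -> 'I_N} | bad v) \prod_(j < n) p (v j) <= expR (- (n%:R * a ^+ 2)).
    apply: (@chernoff_fin R n N p eta C a r0) => //.
    - by move=> k; exact: pb0.
    - exact: pb1.
    - move=> k; exact: (@kC R C eta e0 (ltW C0) k).
  have hfin : Pr E = (fine (Pr E))%:E by rewrite fineK //; apply: fin_num_measure.
  rewrite hfin -EFinD => /eqP; rewrite eqe => /eqP h1.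
  rewrite lee_fin; lra.
move=> w /bigsetU_memP [v [_ hv1 hv2]].
apply: (le_trans (@int_le R dZ Z P f C eta f0 fC mf e0)); rewrite lee_fin.
have : B - r0 <= (\sum_(j < n) (v j)%:R * eta) / n%:R by rewrite leNgt.
have : (\sum_(j < n) (v j)%:R * eta) / n%:R <= (\sum_(j < n) f (X j w)) / n%:R.
  rewrite ler_pM2r ?invr_gt0 ?ltr0n //; apply: ler_sum => j _.
  by have /andP [h _] := hv2 j.
rewrite /B /p; lra.
Qed.


Section Det.
Variables (R : realType) (Z : eqType) (K : nat) (Zc : 'I_K -> set Z).
Hypothesis disj : forall i j, i != j -> Zc i `&` Zc j = set0.

Lemma Zc_uniq i j z : Zc i z -> Zc j z -> i = j.
Proof.
move=> h1 h2; apply/eqP; apply/negPn/negP => /disj H.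
by have : (Zc i `&` Zc j) z by []; rewrite H.
Qed.

Lemma part_sum (T : {set 'I_K}) (A : seq Z) (F : Z -> R) :
  (forall z, z \in A -> exists2 i, i \in T & Zc i z) ->
  \sum_(z <- A) F z = \sum_(i in T) \sum_(z <- cell (Zc i) A) F z.
Proof.
move=> cov.
under [RHS]eq_bigr do rewrite big_filter big_mkcond /=.
rewrite exchange_big /= big_seq_cond [RHS]big_seq_cond; apply: eq_bigr => z /andP [zA _].
have [i iT zi] := cov z zA.
rewrite (bigD1 i) //= big1 ?addr0; first by rewrite ifT //; apply/mem_set.
move=> j /andP [_ ji]; case: ifP => // /set_mem zj.
by move: ji; rewrite (@Zc_uniq j i z zj zi) eqxx.
Qed.

Lemma part_size (T : {set 'I_K}) (A : seq Z) :
  (forall z, z \in A -> exists2 i, i \in T & Zc i z) ->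
  (size A)%:R = \sum_(i in T) (size (cell (Zc i) A))%:R :> R.
Proof.
move=> cov; rewrite -sum1_size natr_sum (@part_sum T A (fun=> 1) cov).
by apply: eq_bigr => i _; rewrite -sum1_size natr_sum.
Qed.

Lemma sum_const_seq (A : seq Z) (c : R) : \sum_(z <- A) c = c * (size A)%:R.
Proof. by rewrite -sum1_size natr_sum mulr_sumr; apply: eq_bigr => _ _; rewrite mulr1. Qed.

Lemma det_bound (f : Z -> R) (S Shat : seq Z) :
  \bigcup_i Zc i = setT -> (0 < size S)%N ->
  (forall i, i \in occupied Zc S ->
     (size (cell (Zc i) S))%:R / (size S)%:R
     = (size (cell (Zc i) Shat))%:R / (m_total Zc S Shat)%:R :> R) ->
  (forall s, s \in Shat -> exists2 i, i \in occupied Zc S & Zc i s) ->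
  emp_risk f S <= eps_bar f Zc S Shat + emp_risk f Shat.
Proof.
move=> cover n0 hrat hcov.
set T := occupied Zc S.
have covS : forall z, z \in S -> exists2 i, i \in T & Zc i z.
  move=> z zS; have : (\bigcup_i Zc i) z by rewrite cover.
  case=> i _ zi; exists i => //.
  rewrite /T /occupied inE size_filter -has_count; apply/hasP; exists z => //.
  exact/mem_set.
have hm : (size Shat)%:R = (m_total Zc S Shat)%:R :> R.
  by rewrite (@part_size T Shat hcov) /m_total natr_sum.
set n := (size S)%:R : R.
set m := (m_total Zc S Shat)%:R : R.
have n0' : 0 < n by rewrite ltr0n.
have TS : forall i, i \in T -> (0 < size (cell (Zc i) S))%N by move=> i; rewrite inE.
have m0 : 0 < m.
  have [z zS] : exists z, z \in S.
    by case hS: S => [|z s]; [rewrite hS in n0 | exists z; rewrite mem_head].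
  have [i iT _] := covS z zS.
  have := hrat i iT; rewrite -/n -/m.
  have hp : 0 < (size (cell (Zc i) S))%:R / n by apply: divr_gt0 => //; rewrite ltr0n TS.
  move=> h; rewrite lt0r /m ler0n andbT; apply/eqP => m00; move: h.
  by rewrite /m m00 invr0 mulr0 => h; move: hp; rewrite h ltxx.
rewrite /emp_risk -/n hm -/m (@part_sum T S f covS) (@part_sum T Shat f hcov) !mulr_sumr /eps_bar -/m.
rewrite -/T -lerBlDr -sumrB.
apply: ler_sum => i iT.
set ni := (size (cell (Zc i) S))%:R : R.
set mi := (size (cell (Zc i) Shat))%:R : R.
have ni0 : 0 < ni by rewrite ltr0n TS.
have hr : ni / n = mi / m by exact: hrat.
have mi0 : 0 < mi.
  have : 0 < ni / n by apply: divr_gt0.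
  rewrite hr => h; have -> : mi = mi / m * m by rewrite divfK // lt0r_neq0.
  exact: mulr_gt0.
set SA := \sum_(z <- cell (Zc i) S) f z.
set SB := \sum_(s <- cell (Zc i) Shat) f s.
have hD : mi * SA - ni * SB <= \sum_(z <- cell (Zc i) S) \sum_(s <- cell (Zc i) Shat) `|f z - f s|.
  apply: (le_trans (y := \sum_(z <- cell (Zc i) S) \sum_(s <- cell (Zc i) Shat) (f z - f s))).
    rewrite le_eqVlt; apply/orP; left; apply/eqP.
    under [RHS]eq_bigr do rewrite sumrB sum_const_seq.
    rewrite sumrB sum_const_seq /SA -mulr_suml. rewrite -/mi -/ni -/SB; ring.
  by apply: ler_sum => z _; apply: ler_sum => s _; exact: ler_norm.
rewrite /eps_cell -/ni -/mi -/SA -/SB.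
have e1 : n^-1 * SA - m^-1 * SB = (mi / m) * ((mi * ni)^-1 * (mi * SA - ni * SB)).
  have : mi = ni / n * m by rewrite hr mulrVK // unitfE lt0r_neq0.
  move=> ->; field; apply/and3P; split; apply: lt0r_neq0; [exact: n0' | exact: ni0 | exact: m0].
rewrite e1 ler_wpM2l //; first by apply: divr_ge0; exact: ltW.
rewrite ler_wpM2l //; rewrite invr_ge0; apply: mulr_ge0; exact: ltW.
Qed.

End Det.


Theorem theorem2 (R : realType)
  (dZ : measure_display) (Z : measurableType dZ) (P : probability Z R)
  (Tr : seq Z -> seq Z)
  (H : Type) (loss : H -> Z -> R) (h : H) (C : R)
  (K : nat) (Zc : 'I_K -> set Z)
  (n : nat) (dO : measure_display) (Omega : measurableType dO)
  (Pr : probability Omega R) (X : 'I_n -> Omega -> Z)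
  (gamma delta alpha : R) :
  (forall h' z, 0 <= loss h' z) ->
  measurable_fun setT (loss h) ->
  has_ubound (range (loss h)) ->
  C = sup (range (loss h)) ->
  (forall i, measurable (Zc i)) ->
  (forall i j, i != j -> Zc i `&` Zc j = set0) ->
  \bigcup_i Zc i = setT ->
  (0 < n)%N ->
  iid_sample Pr P X ->
  1 <= gamma -> 0 < delta ->
  0 <= alpha ->
  alpha <= gamma * n%:R * (K%:R + gamma * n%:R) / (K%:R * (4 * n%:R - 3)) ->
  exists E : set Omega, measurable E /\
    ((1 - gamma `^ (- alpha) - delta)%:E <= Pr E)%E /\
    forall w, E w ->
      let S := [seq X j w | j <- enum 'I_n] in
      let Shat := Tr S in
      let T := occupied Zc S in
      ((forall i, i \in T ->
          (size (cell (Zc i) S))%:R / n%:R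
          = (size (cell (Zc i) Shat))%:R / (m_total Zc S Shat)%:R :> R) ->
       (forall s, s \in Shat -> exists2 i, i \in T & Zc i s) ->
       (\int[P]_z (loss h z)%:E <=
          (eps_bar (loss h) Zc S Shat + emp_risk (loss h) Shat
           + C * Num.sqrt (u_hat Zc S gamma delta * alpha * ln gamma)
           + g_bound Zc S C (delta / 2))%:E)%E).
Proof.
move=> hl mfl hub hC mZ disj cover n0 iid g1 d0 al0 alle.
set f := loss h.
have f0 z : 0 <= f z := hl h z.
have fC z : f z <= C by rewrite hC; apply: ub_le_sup => //; exists z.
have pw0 : 0 <= gamma `^ (- alpha) := powR_ge0 _ _.
have nR : 0 < n%:R :> R by rewrite ltr0n.
have final : forall w r, let S := [seq X j w | j <- enum 'I_n] in
   (\int[P]_z (f z)%:E <= ((\sum_(j < n) f (X j w)) / n%:R + r)%:E)%E ->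
   r <= g_bound Zc S C (delta / 2) ->
   (forall i, i \in occupied Zc S ->
          (size (cell (Zc i) S))%:R / n%:R
          = (size (cell (Zc i) (Tr S)))%:R / (m_total Zc S (Tr S))%:R :> R) ->
   (forall s, s \in Tr S -> exists2 i, i \in occupied Zc S & Zc i s) ->
   (\int[P]_z (loss h z)%:E <=
          (eps_bar (loss h) Zc S (Tr S) + emp_risk (loss h) (Tr S)
           + C * Num.sqrt (u_hat Zc S gamma delta * alpha * ln gamma)
           + g_bound Zc S C (delta / 2))%:E)%E.
  move=> w r S hint hr hrat hcov.
  have szS : size S = n by rewrite size_map size_enum_ord.
  have C0 : 0 <= C := le_trans (f0 (X (Ordinal n0) w)) (fC _).
  have hemp : emp_risk f S = (\sum_(j < n) f (X j w)) / n%:R.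
    by rewrite /emp_risk szS mulrC big_map big_enum.
  have hdet : emp_risk f S <= eps_bar f Zc S (Tr S) + emp_risk f (Tr S).
    apply: det_bound => //; first by rewrite szS.
    by move=> i iT; rewrite szS; exact: hrat.
  apply: (le_trans hint); rewrite lee_fin -hemp.
  have : 0 <= C * Num.sqrt (u_hat Zc S gamma delta * alpha * ln gamma).
    by apply: mulr_ge0.
  rewrite -/f; lra.
have j0 : 'I_n := Ordinal n0.
case: (lerP 1 delta) => d1.
  exists set0; split => //; split; last by move=> w [].
  rewrite measure0 lee_fin; lra.
case: (lerP C 0) => C0.
  exists setT; split => //; split.
    rewrite probability_setT lee_fin; lra.
  move=> w _ S Shat T hrat hcov.
  have C00 : C = 0 by have := f0 (X j0 w); have := fC (X j0 w); lra.
  have fz z : f z = 0 by have := f0 z; have := fC z; lra.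
  apply: (final w 0) => //.
    have -> : (fun z => (loss h z)%:E) = cst 0%E by apply/funext => z /=; rewrite -/f fz.
    rewrite integral0 lee_fin addr0; apply: divr_ge0; last exact: ler0n.
    by apply: sumr_ge0 => j _.
  by rewrite /g_bound C00 /=; lra.
set L := ln (4 / delta).
have L0 : 0 < L by apply: ln_gt0; rewrite ltr_pdivlMr //; lra.
set a := Num.sqrt (L / n%:R).
have a2 : a ^+ 2 = L / n%:R by rewrite sqr_sqrtr // divr_ge0 // ltW.
have a0 : 0 < a by rewrite sqrtr_gt0 divr_gt0.
set s2 := Num.sqrt (2 : R).
have s0 : 0 <= s2 by rewrite sqrtr_ge0.
have s2sq : s2 ^+ 2 = 2 by rewrite sqr_sqrtr.
have s65 : 6 / 5 <= s2 by nra.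
set r0 := C * ((s2 + 1) * a + 2 * a ^+ 2).
have hr : C * a / 5 + C * (2 * a + a ^+ 2) <= r0.
  have h0 : 0 <= s2 - 6 / 5 by rewrite subr_ge0.
  have h1 := mulr_ge0 (ltW C0) (mulr_ge0 h0 (ltW a0)).
  have h2 := mulr_ge0 (ltW C0) (sqr_ge0 a).
  rewrite /r0; nra.
have [E [mE [hPE hw]]] := @core R dZ Z P f C n dO Omega Pr X a r0 f0 fC mfl n0 iid C0 a0 hr.
exists E; split => //; split.
  apply: le_trans hPE; rewrite lee_fin.
  have -> : n%:R * a ^+ 2 = L by rewrite a2 mulrC divfK // lt0r_neq0.
  rewrite expRN lnK ?posrE ?divr_gt0 // invf_div; lra.
move=> w Ew S Shat T hrat hcov.
apply: (final w r0) => //; first exact: hw.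
have szS : size S = n by rewrite size_map size_enum_ord.
rewrite /g_bound /= szS.
set t := (#|occupied Zc S|)%:R : R.
have z0S : X j0 w \in S by apply: map_f; rewrite mem_enum.
have [i _ zi] : (\bigcup_i Zc i) (X j0 w) by rewrite cover.
have iT : i \in occupied Zc S.
  rewrite inE size_filter -has_count; apply/hasP; exists (X j0 w) => //.
  exact/mem_set.
have t1 : 1 <= t by rewrite /t ler1n card_gt0; apply/set0Pn; exists i.
have K1 : 1 <= K%:R :> R by rewrite ler1n; exact: (leq_ltn_trans (leq0n i) (ltn_ord i)).
set L' := ln (2 * K%:R / (delta / 2)).
have LL : L <= L'.
  have e : 2 * K%:R / (delta / 2) = 4 / delta * K%:R by field; lra.
  have di : 0 < delta^-1 by rewrite invr_gt0.
  rewrite /L' e ler_ln ?posrE ?mulr_gt0 ?divr_gt0 //; last lra.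
  by rewrite ler_peMr // ltW // divr_gt0.
have hq : L / n%:R <= t * L' / n%:R.
  rewrite ler_pM2r ?invr_gt0 //.
  have h1 : 0 <= t - 1 by rewrite subr_ge0.
  have h2 : 0 <= L' by lra.
  have := mulr_ge0 h1 h2; nra.
have ha : a <= Num.sqrt (t * L' / n%:R) by exact: ler_wsqrtr.
have k1 : C * (s2 + 1) * a <= C * (s2 + 1) * Num.sqrt (t * L' / n%:R).
  by rewrite ler_wpM2l // mulr_ge0 //; lra.
have k2 : (2 * C) * (L / n%:R) <= (2 * C) * (t * L' / n%:R) by rewrite ler_wpM2l //; lra.
have e1 : 2 * C * t * L' / n%:R = (2 * C) * (t * L' / n%:R) by ring.
have e2 : r0 = C * (s2 + 1) * a + (2 * C) * (L / n%:R) by rewrite /r0 a2; ring.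
rewrite e1 e2 -/s2; lra.
Qed.
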